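(* Let $s\in\{0,\tfrac12\}$, $\lambda\in\mathbb{C}$ and $\sigma\in\mathrm{Aut}(\mathfrak{L}^s_\lambda)$. Then there exist $\tau\in\mathfrak{I}$, $\epsilon\in\{1,-1\}$, $\alpha,\mu\in\mathbb{C}\setminus\{0\}$ and $\beta\in\mathbb{C}$ such that for all $m\in\mathbb{Z}$, $$(\sigma\tau)(L_m)=\epsilon\alpha^mL_{\epsilon m}+m\alpha^m\beta\, I_{\epsilon m},\qquad (\sigma\tau)(I_m)=\alpha^m\mu\, I_{\epsilon m}.$$
   Context: For $s\in\{0,\tfrac12\}$ and $\lambda\in\mathbb{C}$, $\mathfrak{L}^s_\lambda$ is the complex Lie superalgebra with basis $\{L_m,I_m,G_p,H_p : m\in\mathbb{Z},\ p\in s+\mathbb{Z}\}$, even part spanned by the $L_m,I_m$, odd part spanned by the $G_p,H_p$, with brackets $[L_m,L_n]=(m-n)L_{m+n}$, $[L_m,I_n]=(m-n)I_{m+n}$, $[L_m,H_p]=(\tfrac m2-p)H_{m+p}$, $[L_m,G_p]=(\tfrac m2-p)G_{m+p}+\lambda(m+1)H_{m+p}$, $[I_m,G_p]=(m-2p)H_{m+p}$, $[G_p,G_q]=I_{p+q}$, plus super-antisymmetry; all other brackets of basis elements are zero. $\mathrm{Aut}(\mathfrak{L})$ is the group of bijective parity-preserving linear maps $\sigma$ with $\sigma([x,y])=[\sigma(x),\sigma(y)]$. $\mathfrak{I}$ is the subgroup of $\mathrm{Aut}(\mathfrak{L})$ generated by the maps $\exp(\alpha\,\mathrm{ad}\,I_k)=\mathrm{id}+\alpha\,\mathrm{ad}\,I_k$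 ($\alpha\in\mathbb{C}$, $k\in\mathbb{Z}$), where $\mathrm{ad}\,x(y)=[x,y]$. *)

(* Defs.v *)
From HB Require Import structures.
From mathcomp Require Import all_boot all_order all_algebra.
Set Implicit Arguments. Unset Strict Implicit. Unset Printing Implicit Defensive.
Import Order.TTheory GRing.Theory Num.Theory.
Local Open Scope ring_scope.

(* Basis of L^s_lambda.  For the odd generators G_p, H_p with p in s + Z we
   store the integer q with p = q + s (s = 1/2 iff [half] is true). *)
Inductive basis := bL of int | bI of int | bG of int | bH of int.

Definition basis_enc (b : basis) : nat * int :=
  match b with bL m => (0%N, m) | bI m => (1%N, m) | bG q => (2%N, q) | bH q => (3%N, q) end.
Definition basis_dec (x : nat * int) : option basis :=
  match x with
  | (0%N, m) => Some (bL m) | (1%N, m) => Some (bI m)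
  | (2%N, q) => Some (bG q) | (3%N, q) => Some (bH q) | _ => None end.
Lemma basis_encK : pcancel basis_enc basis_dec. Proof. by case. Qed.
HB.instance Definition _ := Equality.copy basis (pcan_type basis_encK).

Definition parity (b : basis) : bool :=
  match b with bL _ | bI _ => false | bG _ | bH _ => true end.

(* An element of the algebra is a finite formal linear combination of basis
   vectors; two such are equal iff they have the same coefficients [coef]. *)
Definition elt (C : Type) := seq (C * basis).

Section Alg.
Variable C : numClosedFieldType.
Variable half : bool.
Variable lam : C.

Definition coef (x : elt C) (b : basis) : C := \sum_(t <- x | t.2 == b) t.1.
Definition scale (a : C) (x : elt C) : elt C := [seq (a * t.1, t.2) | t <- x].

Definition sC : C := if half then 2^-1 else 0.
Definition pval (q : int) : C := q%:~R + sC.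
Definition sI : int := if half then 1 else 0.          (* 2s *)

(* bracket of basis elements (super-antisymmetry built in) *)
Definition br (x y : basis) : elt C :=
  match x, y with
  | bL m, bL n => [:: ((m - n)%:~R, bL (m + n))]
  | bL m, bI n => [:: ((m - n)%:~R, bI (m + n))]
  | bI n, bL m => [:: (- (m - n)%:~R, bI (m + n))]
  | bL m, bH q => [:: (m%:~R / 2%:R - pval q, bH (m + q))]
  | bH q, bL m => [:: (- (m%:~R / 2%:R - pval q), bH (m + q))]
  | bL m, bG q => [:: (m%:~R / 2%:R - pval q, bG (m + q));
                     (lam * (m + 1)%:~R, bH (m + q))]
  | bG q, bL m => [:: (- (m%:~R / 2%:R - pval q), bG (m + q));
                     (- (lam * (m + 1)%:~R), bH (m + q))]
  | bI m, bG q => [:: (m%:~R - 2%:R * pval q, bH (m + q))]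
  | bG q, bI m => [:: (- (m%:~R - 2%:R * pval q), bH (m + q))]
  | bG p, bG q => [:: (1, bI (p + q + sI))]
  | _, _ => [::]
  end.

Definition brx (x y : elt C) : elt C :=
  flatten [seq scale (t.1 * u.1) (br t.2 u.2) | t <- x, u <- y].

Definition ext (f : basis -> elt C) (x : elt C) : elt C :=
  flatten [seq scale t.1 (f t.2) | t <- x].

(* sig : basis -> elt C describes the linear map sending each basis vector b
   to sig b.  It is an automorphism of the Lie superalgebra iff it is
   parity-preserving, bracket-preserving and bijective. *)
Definition is_aut (sig : basis -> elt C) : Prop :=
  [/\ (forall b b', coef (sig b) b' != 0 -> parity b' = parity b),
      (forall x y : elt C, coef (ext sig (brx x y)) =1 coef (brx (ext sig x) (ext sig y))),
      (forall x y : elt C, coef (ext sig x) =1 coef (ext sig y) -> coef x =1 coef y) &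
      (forall y : elt C, exists x : elt C, coef (ext sig x) =1 coef y)].

(* exp(a ad I_k) = id + a ad I_k on basis vectors *)
Definition expadI (a : C) (k : int) (b : basis) : elt C :=
  (1, b) :: scale a (br (bI k) b).

(* elements of the group generated by the exp(a ad I_k): finite compositions *)
Definition Iact (tau : seq (C * int)) (x : elt C) : elt C :=
  foldr (fun t acc => ext (expadI t.1 t.2) acc) x tau.

End Alg.

(* Main.v *)
Require Import Defs.
From HB Require Import structures.
From mathcomp Require Import all_boot all_order all_algebra.
From mathcomp Require Import zify ring lra.
Import Order.TTheory GRing.Theory Num.Theory.
Local Open Scope ring_scope.
Set Implicit Arguments. Unset Strict Implicit. Unset Printing Implicit Defensive.

Section Basic.
Variable C : numClosedFieldType.

Lemma eqLL (a b : int) : (bL a == bL b) = (a == b).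
Proof. by apply/eqP/eqP => [[]|->]. Qed.
Lemma eqII (a b : int) : (bI a == bI b) = (a == b).
Proof. by apply/eqP/eqP => [[]|->]. Qed.
Lemma eqGG (a b : int) : (bG a == bG b) = (a == b).
Proof. by apply/eqP/eqP => [[]|->]. Qed.
Lemma eqHH (a b : int) : (bH a == bH b) = (a == b).
Proof. by apply/eqP/eqP => [[]|->]. Qed.

Lemma coef_nil b : coef (C:=C) [::] b = 0.
Proof. by rewrite /coef big_nil. Qed.
Lemma coef_cons (a : C) b' x b :
  coef ((a, b') :: x) b = (if b' == b then a else 0) + coef x b.
Proof. by rewrite /coef big_cons /=; case: (b' == b); rewrite ?add0r. Qed.
Lemma coef_cat (x y : elt C) b : coef (x ++ y) b = coef x b + coef y b.
Proof. by rewrite /coef big_cat. Qed.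
Lemma coef_scale (a : C) x b : coef (scale a x) b = a * coef x b.
Proof.
elim: x => [|[c b'] x IH]; first by rewrite /scale /= !coef_nil mulr0.
rewrite /scale /= coef_cons -/(scale a x) IH coef_cons mulrDr.
by case: (b' == b); rewrite ?mulr0.
Qed.
Lemma coef_flatten (l : seq (elt C)) b : coef (flatten l) b = \sum_(x <- l) coef x b.
Proof.
elim: l => [|x l IH]; first by rewrite big_nil coef_nil.
by rewrite /= coef_cat IH big_cons.
Qed.
Lemma coef_ext f (x : elt C) b :
  coef (ext f x) b = \sum_(t <- x) t.1 * coef (f t.2) b.
Proof. by rewrite /ext coef_flatten big_map; apply: eq_bigr => t _; rewrite coef_scale. Qed.
Lemma coef_brx (lam : C) half (x y : elt C) b :
  coef (brx half lam x y) b =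
  \sum_(t <- x) \sum_(u <- y) t.1 * u.1 * coef (br half lam t.2 u.2) b.
Proof.
rewrite /brx coef_flatten.
elim: x => [|t x IH]; first by rewrite !big_nil.
rewrite /= big_cat big_cons IH; congr (_ + _).
by rewrite big_map; apply: eq_bigr => u _; rewrite coef_scale.
Qed.

Definition supp (x : elt C) := undup (map snd x).
Lemma supp_uniq x : uniq (supp x). Proof. exact: undup_uniq. Qed.

Lemma coef_supp x b : coef x b != 0 -> b \in supp x.
Proof.
rewrite /coef mem_undup => H; apply/mapP.
have [//|] := boolP (has (fun t : C * basis => t.2 == b) x).
  by move/hasP => [t Ht /eqP <-]; exists t.
move/hasPn => Hn; move: H; rewrite big_seq_cond big1 ?eqxx //.
by move=> t /andP[Ht Hb]; move: (Hn t Ht); rewrite Hb.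
Qed.

Lemma sum_point (s : seq basis) (f : basis -> C) b0 :
  uniq s -> (forall b, b != b0 -> f b = 0) -> (b0 \notin s -> f b0 = 0) ->
  \sum_(b <- s) f b = f b0.
Proof.
move=> us H0 H1; have [bs|bs] := boolP (b0 \in s).
  rewrite (bigD1_seq b0) //= big1 ?addr0 // => b; exact: H0.
rewrite H1 // big_seq big1 // => b bin; apply: H0; apply: contraNneq bs => <-.
done.
Qed.

Lemma regroup0 (x : elt C) (g : basis -> C) (s : seq basis) :
  uniq s -> (forall t, t \in x -> t.2 \in s) ->
  \sum_(t <- x) t.1 * g t.2 = \sum_(b <- s) coef x b * g b.
Proof.
move=> us; elim: x => [|[a b'] x IH] H.
  by rewrite big_nil big1 // => b _; rewrite coef_nil mul0r.
rewrite big_cons IH; last by move=> t tx; apply: H; rewrite in_cons tx orbT.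
have b's : b' \in s by exact: (H (a, b') (mem_head _ _)).
rewrite /=.
under [X in _ = X]eq_bigr => b _ do rewrite coef_cons mulrDl.
rewrite big_split /=; congr (_ + _).
rewrite (sum_point (b0 := b')) //=; first by rewrite eqxx.
by move=> b /negbTE; rewrite eq_sym => ->; rewrite mul0r.
by rewrite b's.
Qed.

Lemma regroup (x : elt C) (g : basis -> C) (s : seq basis) :
  uniq s -> (forall b, coef x b != 0 -> b \in s) ->
  \sum_(t <- x) t.1 * g t.2 = \sum_(b <- s) coef x b * g b.
Proof.
move=> us cov.
pose S := undup (s ++ map snd x).
rewrite (@regroup0 x g S (undup_uniq _)); last first.
  by move=> t tx; rewrite mem_undup mem_cat map_f ?orbT.
rewrite (bigID (fun b => b \in s)) /= [X in _ + X]big1 ?addr0; last first.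
  move=> b bs; have : coef x b == 0.
    by apply: contraNT bs => /cov.
  by move/eqP => ->; rewrite mul0r.
rewrite -big_filter; apply: perm_big; apply: uniq_perm.
- by rewrite filter_uniq // undup_uniq.
- done.
move=> b; rewrite mem_filter mem_undup mem_cat.
by case: (b \in s).
Qed.

Lemma coef_ext_s f (x : elt C) s b : uniq s -> (forall b, coef x b != 0 -> b \in s) ->
  coef (ext f x) b = \sum_(c <- s) coef x c * coef (f c) b.
Proof. by move=> us cov; rewrite coef_ext (@regroup x (fun c => coef (f c) b) s us cov). Qed.

Lemma coef_brx_s lam half (x y : elt C) s s' b : uniq s -> (forall b, coef x b != 0 -> b \in s) ->
  uniq s' -> (forall b, coef y b != 0 -> b \in s') ->
  coef (brx half lam x y) b =
  \sum_(c <- s) \sum_(c' <- s') coef x c * coef y c' * coef (br half lam c c') b.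
Proof.
move=> us cov us' cov'; rewrite coef_brx.
have -> : \sum_(t <- x) \sum_(u <- y) t.1 * u.1 * coef (br half lam t.2 u.2) b =
   \sum_(t <- x) t.1 * (\sum_(c' <- s') coef y c' * coef (br half lam t.2 c') b).
  apply: eq_bigr => t _; rewrite mulr_sumr.
  have := (@regroup y (fun c' => t.1 * coef (br half lam t.2 c') b) s' us' cov').
  have E : \sum_(u <- y) t.1 * u.1 * coef (br half lam t.2 u.2) b =
     \sum_(u <- y) u.1 * (t.1 * coef (br half lam t.2 u.2) b).
    by apply: eq_bigr => u _; ring.
  rewrite E => ->; apply: eq_bigr => c' _; rewrite /=; ring.
rewrite (@regroup x (fun c => \sum_(c' <- s') coef y c' * coef (br half lam c c') b) s us cov).
apply: eq_bigr => c _; rewrite mulr_sumr; apply: eq_bigr => c' _; ring.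
Qed.
End Basic.

Section Tables.
Variable C : numClosedFieldType.
Variable half : bool.
Variable lam : C.

Definition brLv (c c' : basis) (N : int) : C :=
  match c, c' with bL a, bL b => if a + b == N then (a - b)%:~R else 0 | _, _ => 0 end.
Definition brIv (c c' : basis) (N : int) : C :=
  match c, c' with
  | bL a, bI b => if a + b == N then (a - b)%:~R else 0
  | bI b, bL a => if a + b == N then - (a - b)%:~R else 0
  | bG p, bG q => if p + q + sI half == N then 1 else 0
  | _, _ => 0 end.

Lemma brL c c' N : coef (br half lam c c') (bL N) = brLv c c' N.
Proof.
by case: c => a; case: c' => b; rewrite /br /brLv ?coef_cons ?coef_nil ?eqLL ?eqII /= ?addr0 //;
 case: ifP; rewrite ?addr0.
Qed.
Lemma brI c c' N : coef (br half lam c c') (bI N) = brIv c c' N.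
Proof.
by case: c => a; case: c' => b; rewrite /br /brIv ?coef_cons ?coef_nil ?eqLL ?eqII /= ?addr0 //;
 case: ifP; rewrite ?addr0 // addrC.
Qed.
End Tables.
Arguments brLv {C}.
Arguments brIv {C}.

Section Gen.
Variable C : numClosedFieldType.

Lemma pt (s : seq basis) (X g : basis -> C) b0 :
  uniq s -> (forall b, X b != 0 -> b \in s) -> (forall b, b != b0 -> X b * g b = 0) ->
  \sum_(b <- s) X b * g b = X b0 * g b0.
Proof.
move=> us cov H; apply: sum_point => // ns.
have : X b0 == 0 by apply: contraNT ns => /cov.
by move/eqP => ->; rewrite mul0r.
Qed.

Lemma exists_max0 (s : seq int) (P : pred int) (f : int -> int) :
  has P s -> exists k, P k /\ forall b, b \in s -> P b -> (f b <= f k)%R.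
Proof.
elim: s => [//|x s IH] /=.
have [Px|nPx] := boolP (P x) => /= Hs.
  have [hs|nhs] := boolP (has P s).
    have [k [Pk Hk]] := IH hs.
    have [le|lt] := lerP (f x) (f k).
      exists k; split => // b; rewrite in_cons => /orP[/eqP->//|bs] Pb; exact: Hk.
    exists x; split => // b; rewrite in_cons => /orP[/eqP->//|bs] Pb.
    by apply: le_trans (Hk b bs Pb) (ltW lt).
  exists x; split => // b; rewrite in_cons => /orP[/eqP->//|bs] Pb.
  by move/hasPn: nhs => /(_ b bs); rewrite Pb.
have [k [Pk Hk]] := IH Hs; exists k; split => // b.
by rewrite in_cons => /orP[/eqP->|bs] Pb; [rewrite Pb in nPx|exact: Hk].
Qed.

Lemma exists_max (s : seq int) (P : pred int) (f : int -> int) a :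
  a \in s -> P a -> exists k, [/\ P k, (f a <= f k)%R & forall b, b \in s -> P b -> (f b <= f k)%R].
Proof.
move=> ais Pa; have hs : has P s by apply/hasP; exists a.
have [k [Pk Hk]] := exists_max0 f hs; exists k; split => //; exact: Hk.
Qed.


Lemma int_ind2 (P : int -> Prop) :
  P 0 -> (forall m, P m <-> P (m + 1)) -> forall m, P m.
Proof.
move=> P0 HS; case=> n.
  elim: n => [//|n IH]; rewrite (_ : (n.+1)%:Z = n%:Z + 1); last by lia.
  exact: (proj1 (HS n) IH).
elim: n => [|n IH].
  apply: (proj2 (HS (Negz 0))); by rewrite (_ : Negz 0 + 1 = 0).
apply: (proj2 (HS (Negz n.+1))); rewrite (_ : Negz n.+1 + 1 = Negz n) //; lia.
Qed.

Lemma mult_fe (w : int -> C) :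
  (forall m n, m != n -> w (m + n) = w m * w n) -> (forall m, w m != 0) ->
  forall m, w m = w 1 ^ m.
Proof.
move=> H nz.
set a := w 1.
have a0 : a != 0 := nz 1.
have w0 : w 0 = 1.
  have := H 1 0 isT; rewrite addr0 -/a => /eqP; rewrite -subr_eq0.
  rewrite -{1}[a]mulr1 -mulrBr mulf_eq0 (negbTE a0) /= subr_eq0 => /eqP.
  by move=> <-.
have wm1 : w (-1) * a = 1.
  by have := H (-1) 1 isT; rewrite (_ : -1 + 1 = 0) // w0 => <-.
have w2 : w 2 = a * a.
  have := H 2 (-1) isT; rewrite (_ : 2 + -1 = 1) // -/a => E.
  by rewrite -[LHS]mulr1 -wm1 mulrA -E.
have S : forall m, w (m + 1) = w m * a.
  move=> m; have [->|m1] := eqVneq m 1; first by rewrite w2.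
  by rewrite H.
apply: int_ind2; first by rewrite w0 expr0z.
move=> m; rewrite S expfzDr // expr1z; split => [->//|E].
by apply: (mulIf a0).
Qed.

Lemma add_fe (e : int -> C) :
  (forall m n, m != n -> e (m + n) = e m + e n) ->
  forall m, e m = m%:~R * e 1.
Proof.
move=> H.
have e0 : e 0 = 0.
  have := H 1 0 isT; rewrite addr0 => /eqP; rewrite -subr_eq0 opprD addrA subrr sub0r oppr_eq0.
  by move/eqP.
have em1 : e (-1) + e 1 = 0.
  by have := H (-1) 1 isT; rewrite (_ : -1 + 1 = 0) // e0 => <-.
have e2 : e 2 = e 1 + e 1.
  have := H 2 (-1) isT; rewrite (_ : 2 + -1 = 1) // => E.
  have : e (-1) = - e 1 by apply/eqP; rewrite -subr_eq0 opprK em1.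
  by move=> h; rewrite h in E; rewrite {2}E addrC subrK.
have S : forall m, e (m + 1) = e m + e 1.
  move=> m; have [->|m1] := eqVneq m 1; first by rewrite e2.
  by rewrite H.
apply: int_ind2; first by rewrite e0 mul0r.
move=> m; rewrite S intrD mulrDl mul1r; split => [->//|E].
by apply: (addIr (e 1)).
Qed.

Lemma sum_point_eq (T : eqType) (s : seq T) (f : T -> C) b0 :
  uniq s -> (forall b, b != b0 -> f b = 0) ->
  \sum_(b <- s) f b = if b0 \in s then f b0 else 0.
Proof.
move=> us H; case: ifP => bs.
  rewrite (bigD1_seq b0) //= big1 ?addr0 // => b; exact: H.
rewrite big_seq big1 // => b bin; apply: H; apply: contraFneq bs => <-; done.
Qed.
End Gen.

Section Top.
Variable C : numClosedFieldType.
Variable half : bool.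
Variable lam : C.

Definition Ld (s : seq basis) := [seq (if b is bL a then a else 0) | b <- s].
Lemma Ld_in s a : bL a \in s -> a \in Ld s.
Proof. by move=> H; apply/mapP; exists (bL a). Qed.

Definition cover (X : basis -> C) (s : seq basis) := forall b, X b != 0 -> b \in s.

Lemma rcase (r : int) : r = 1 \/ r = -1 -> (r = 1) \/ (r = -1). Proof. by []. Qed.

Lemma topdeg (r k : int) (X Y : basis -> C) sx sy (c0 : C) :
  uniq sx -> cover X sx -> uniq sy -> cover Y sy -> (r = 1 \/ r = -1) -> 0 < r * k ->
  X (bL k) != 0 -> (forall a, r * k < r * a -> X (bL a) = 0) ->
  (forall N, \sum_(c <- sx) X c * \sum_(c' <- sy) Y c' * brLv c c' N = c0 * Y (bL N)) ->
  forall j, r * k < r * j -> Y (bL j) = 0.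
Proof.
move=> ux cx uy cy hr rk Xk Xa HN j hj; apply/eqP; apply: contraT => Yj.
have jin : j \in Ld sy by apply: Ld_in; exact: cy.
have [j0 [Pj0 hj0 Hm0]] := exists_max (fun j => r * j) (P := fun j => Y (bL j) != 0) jin Yj.
have Hm : forall i, Y (bL i) != 0 -> r * i <= r * j0.
  by move=> i Yi; apply: Hm0 => //; apply: Ld_in; exact: cy.
set N := k + j0.
have E := HN N.
have hr' : forall a : int, r * a = a \/ r * a = - a.
  by move=> a; case: hr => ->; [left; rewrite mul1r | right; rewrite mulN1r].
rewrite (@pt _ sx X (fun c => \sum_(c' <- sy) Y c' * brLv c c' N) (bL k)) // in E; last first.
  case=> a; rewrite ?eqLL => hak; last 3 first.
  - by rewrite big1 ?mulr0 // => c' _; rewrite /brLv mulr0.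
  - by rewrite big1 ?mulr0 // => c' _; rewrite /brLv mulr0.
  - by rewrite big1 ?mulr0 // => c' _; rewrite /brLv mulr0.
  have [Xa0|Xa0] := eqVneq (X (bL a)) 0; first by rewrite Xa0 mul0r.
  have ra : r * a < r * k.
    rewrite lt_neqAle; apply/andP; split.
      apply: contraNneq hak => /eqP; case: hr => ->; rewrite ?mul1r ?mulN1r ?eqr_opp //.
    by rewrite leNgt; apply: contra Xa0 => /Xa ->.
  rewrite (@pt _ sy Y (fun c' => brLv (bL a) c' N) (bL (N - a))) //.
    have -> : Y (bL (N - a)) = 0.
      apply/eqP; apply: contraT => /Hm; rewrite /N.
      by case: hr ra rk => -> ; rewrite ?mul1r ?mulN1r; lia.
    by rewrite mul0r mulr0.
  case=> b; rewrite ?eqLL /brLv ?mulr0 // => hb.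
  case: ifP; rewrite ?mulr0 // => /eqP hab; exfalso; move: hb.
  by rewrite -hab addrC addKr eqxx.
rewrite (@pt _ sy Y (fun c' => brLv (bL k) c' N) (bL j0)) // in E; last first.
  case=> b; rewrite ?eqLL /brLv ?mulr0 // => hb.
  case: ifP; rewrite ?mulr0 // => /eqP hab; exfalso; move: hb.
  by move: hab; rewrite /N => /addrI ->; rewrite eqxx.
have YN : Y (bL N) = 0.
  apply/eqP; apply: contraT => /Hm; rewrite /N.
  by case: hr rk => -> ; rewrite ?mul1r ?mulN1r; lia.
rewrite YN in E.
move: E; rewrite mulr0 /brLv /N eqxx => /eqP.
rewrite !mulf_eq0 (negbTE Xk) (negbTE Pj0) /= intr_eq0 subr_eq0 => /eqP kj.
move: hj hj0; rewrite -kj; case: hr => ->; rewrite ?mul1r ?mulN1r; lia.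
Qed.

Lemma LconcL (X Y : basis -> C) sx sy a0 N :
  uniq sx -> cover X sx -> uniq sy -> cover Y sy ->
  (forall a, a != a0 -> X (bL a) = 0) ->
  \sum_(c <- sx) X c * \sum_(c' <- sy) Y c' * brLv c c' N
  = X (bL a0) * (Y (bL (N - a0)) * (a0 - (N - a0))%:~R).
Proof.
move=> ux cx uy cy Ha.
rewrite (@pt _ sx X (fun c => \sum_(c' <- sy) Y c' * brLv c c' N) (bL a0)) //; last first.
  case=> a; rewrite ?eqLL => ha; last 3 first.
  - by rewrite big1 ?mulr0 // => c' _; rewrite /brLv mulr0.
  - by rewrite big1 ?mulr0 // => c' _; rewrite /brLv mulr0.
  - by rewrite big1 ?mulr0 // => c' _; rewrite /brLv mulr0.
  by rewrite Ha ?mul0r.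
rewrite (@pt _ sy Y (fun c' => brLv (bL a0) c' N) (bL (N - a0))) //.
  by rewrite /brLv (_ : a0 + (N - a0) = N) ?eqxx // addrC subrK.
case=> b; rewrite ?eqLL /brLv ?mulr0 // => hb.
case: ifP; rewrite ?mulr0 // => /eqP hab; exfalso; move: hb.
by rewrite -hab addrC addKr eqxx.
Qed.

Lemma IconcI (X Y : basis -> C) sx sy a0 b0 N :
  uniq sx -> cover X sx -> uniq sy -> cover Y sy ->
  (forall b, parity b -> X b = 0) -> (forall b, parity b -> Y b = 0) ->
  (forall a, a != a0 -> X (bL a) = 0) -> (forall a, a != b0 -> Y (bL a) = 0) ->
  \sum_(c <- sx) X c * \sum_(c' <- sy) Y c' * brIv half c c' N
  = X (bL a0) * (Y (bI (N - a0)) * (a0 - (N - a0))%:~R)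
    + X (bI (N - b0)) * (Y (bL b0) * - (b0 - (N - b0))%:~R).
Proof.
move=> ux cx uy cy Xo Yo Ha Hb.
pose g c := \sum_(c' <- sy) Y c' * brIv half c c' N.
pose gL c := if c is bL _ then g c else 0.
pose gI c := if c is bI _ then g c else 0.
have -> : \sum_(c <- sx) X c * g c = \sum_(c <- sx) X c * gL c + \sum_(c <- sx) X c * gI c.
  rewrite -big_split; apply: eq_bigr; case=> a _ /=; rewrite ?mulr0 ?addr0 ?add0r //;
  by rewrite Xo ?mul0r.
congr (_ + _).
  rewrite (@pt _ sx X gL (bL a0)) //; last first.
    case=> a; rewrite ?eqLL /gL ?mulr0 // => ha.
    by rewrite Ha ?mul0r.
  rewrite /gL /g (@pt _ sy Y (fun c' => brIv half (bL a0) c' N) (bI (N - a0))) //.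
    by rewrite /brIv (_ : a0 + (N - a0) = N) ?eqxx // addrC subrK.
  case=> b; rewrite ?eqII /brIv ?mulr0 // => hb.
  case: ifP; rewrite ?mulr0 // => /eqP hab; exfalso; move: hb.
  by rewrite -hab addrC addKr eqxx.
rewrite (@pt _ sx X gI (bI (N - b0))) //; last first.
  case=> a; rewrite ?eqII /gI ?mulr0 // => ha.
  rewrite /g (@pt _ sy Y (fun c' => brIv half (bI a) c' N) (bL b0)) //.
    rewrite /brIv; case: ifP; rewrite ?mulr0 // => /eqP hab; exfalso; move: ha.
    by rewrite -hab => /negP; apply; apply/eqP; lia.
  case=> b; rewrite ?eqLL /brIv ?mulr0 // => hb.
  by rewrite Hb ?mul0r.
rewrite /gI /g (@pt _ sy Y (fun c' => brIv half (bI (N - b0)) c' N) (bL b0)) //.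
  by rewrite /brIv (_ : b0 + (N - b0) = N) ?eqxx // addrC subrK.
case=> b; rewrite ?eqLL /brIv ?mulr0 // => hb.
by rewrite Hb ?mul0r.
Qed.

Lemma ext_coef_eq f (x x' : elt C) : coef x =1 coef x' -> coef (ext f x) =1 coef (ext f x').
Proof.
move=> H B; pose s := undup (supp x ++ supp x').
have us : uniq s := undup_uniq _.
rewrite (@coef_ext_s _ f x s B us); last first.
  by move=> b /coef_supp h; rewrite mem_undup mem_cat h.
rewrite (@coef_ext_s _ f x' s B us); last first.
  by move=> b /coef_supp h; rewrite mem_undup mem_cat h orbT.
by apply: eq_bigr => b _; rewrite H.
Qed.

Lemma expadI_I (c : C) k j B : coef (expadI half lam c k (bI j)) B = coef [:: (1, bI j)] B.
Proof. by rewrite /expadI /br /scale /= !coef_cons coef_nil. Qed.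

Lemma expadI_L (c : C) k m B : coef (expadI half lam c k (bL m)) B =
  coef [:: (1, bL m); (c * (k - m)%:~R, bI (m + k))] B.
Proof.
rewrite /expadI /br /scale /= !coef_cons coef_nil.
by rewrite (_ : c * - (m - k)%:~R = c * (k - m)%:~R) // -intrN opprB.
Qed.

Lemma sum_coef1 (l : elt C) B : \sum_(t <- l) t.1 * coef [:: (1, t.2)] B = coef l B.
Proof.
elim: l => [|t l IH]; first by rewrite big_nil coef_nil.
case: t => a b; by rewrite big_cons IH coef_cons /= coef_cons coef_nil addr0; case: ifP; rewrite ?mulr1 ?mulr0.
Qed.

Lemma Iact_L (tau : seq (C * int)) m :
  coef (Iact half lam tau [:: (1, bL m)]) =1
  coef ((1, bL m) :: [seq (t.1 * (t.2 - m)%:~R, bI (m + t.2)) | t <- tau]).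
Proof.
elim: tau => [//|[c k] tau IH] B.
rewrite /Iact /= -/(Iact half lam tau _) (ext_coef_eq _ IH) coef_ext big_cons /=.
rewrite mul1r expadI_L !coef_cons.
have -> : \sum_(t <- [seq (t.1 * (t.2 - m)%:~R, bI (m + t.2)) | t <- tau])
            t.1 * coef (expadI half lam c k t.2) B =
          coef [seq (t.1 * (t.2 - m)%:~R, bI (m + t.2)) | t <- tau] B.
  rewrite -sum_coef1 !big_map; apply: eq_bigr => t _ /=; by rewrite expadI_I.
by rewrite coef_nil addr0 addrA.
Qed.

Lemma Iact_I (tau : seq (C * int)) m :
  coef (Iact half lam tau [:: (1, bI m)]) =1 coef [:: (1, bI m)].
Proof.
elim: tau => [//|[c k] tau IH] B.
rewrite /Iact /= -/(Iact half lam tau _) (ext_coef_eq _ IH) coef_ext big_cons big_nil /=.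
by rewrite mul1r expadI_I addr0.
Qed.
End Top.

Section Main.
Variable C : numClosedFieldType.
Variable half : bool.
Variable lam : C.
Variable sig : basis -> elt C.
Hypothesis Haut : is_aut half lam sig.

Local Notation F b := (coef (sig b)).
Local Notation sp b := (supp (sig b)).
Local Notation brc := (br half lam).

Lemma par b B : F b B != 0 -> parity B = parity b.
Proof. by case: Haut => H _ _ _; apply: H. Qed.

Lemma ext1 b B : coef (ext sig [:: (1, b)]) B = F b B.
Proof. by rewrite coef_ext big_cons big_nil mul1r addr0. Qed.

Lemma ext_brc b b' B : coef (ext sig (brc b b')) B = \sum_(t <- brc b b') t.1 * F t.2 B.
Proof. exact: coef_ext. Qed.

Lemma brS b b' B :
  coef (ext sig (brc b b')) B =
  \sum_(c <- sp b) F b c * \sum_(c' <- sp b') F b' c' * coef (brc c c') B.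
Proof.
case: Haut => _ H _ _.
have := H [:: (1, b)] [:: (1, b')] B.
rewrite (@coef_brx_s _ _ _ _ _ (sp b) (sp b')); try exact: supp_uniq; last 2 first.
- by move=> c; rewrite ext1; exact: coef_supp.
- by move=> c; rewrite ext1; exact: coef_supp.
move=> E.
have -> : coef (ext sig (brc b b')) B = coef (ext sig (brx half lam [:: (1, b)] [:: (1, b')])) B.
  rewrite !coef_ext /brx /= cats0 big_map; apply: eq_bigr => t _; by rewrite mulr1 mul1r.
rewrite E; apply: eq_bigr => c _; rewrite mulr_sumr; apply: eq_bigr => c' _.
rewrite !ext1; ring.
Qed.

Lemma nonzero b : (forall B, F b B = 0) -> False.
Proof.
case: Haut => _ _ H _ Hn.
have E : coef (ext sig [:: (1, b)]) =1 coef (ext sig [::]).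
  by move=> B; rewrite ext1 /ext /= coef_nil Hn.
have := H _ _ E b.
by rewrite coef_cons eqxx coef_nil addr0 => /eqP; rewrite oner_eq0.
Qed.

Lemma surj B0 : exists x : elt C, forall B,
  \sum_(c <- supp x) coef x c * F c B = if B0 == B then 1 else 0.
Proof.
case: Haut => _ _ _ H; have [x Hx] := H [:: (1, B0)]; exists x => B.
have := Hx B; rewrite (@coef_ext_s C sig x (supp x) B) ?supp_uniq //; last by move=> c; exact: coef_supp.
by move=> ->; rewrite coef_cons coef_nil addr0.
Qed.

Lemma Fpar b B : parity B != parity b -> F b B = 0.
Proof. by move=> H; apply/eqP; apply: contraNT H => /par ->. Qed.

Lemma FI_L n j : F (bI n) (bL j) = 0.
Proof.
have := brS (bG (n - sI half)) (bG 0) (bL j).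
rewrite ext_brc {1}/br big_cons big_nil addr0 mul1r addr0 subrK => ->.
rewrite big1 // => c _; case: c => a; last 3 first.
- by rewrite big1 ?mulr0 // => c' _; rewrite brL /brLv mulr0.
- by rewrite big1 ?mulr0 // => c' _; rewrite brL /brLv mulr0.
- by rewrite big1 ?mulr0 // => c' _; rewrite brL /brLv mulr0.
by rewrite Fpar ?mul0r.
Qed.

Lemma EigL m B :
  \sum_(c <- sp (bL 0)) F (bL 0) c * \sum_(c' <- sp (bL m)) F (bL m) c' * coef (brc c c') B
  = (- m)%:~R * F (bL m) B.
Proof. by rewrite -brS ext_brc {1}/br big_cons big_nil addr0 /= !add0r. Qed.
Lemma EigI m B :
  \sum_(c <- sp (bL 0)) F (bL 0) c * \sum_(c' <- sp (bI m)) F (bI m) c' * coef (brc c c') B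
  = (- m)%:~R * F (bI m) B.
Proof. by rewrite -brS ext_brc {1}/br big_cons big_nil addr0 /= !add0r. Qed.

Lemma cov_sp b : cover (F b) (sp b).
Proof. move=> c; exact: coef_supp. Qed.

Lemma X0L a : a != 0 -> F (bL 0) (bL a) = 0.
Proof.
move=> a0; apply/eqP; apply: contraT => Xa.
pose r : int := if 0 < a then 1 else -1.
have hr : r = 1 \/ r = -1 by rewrite /r; case: ifP; [left|right].
have ra : 0 < r * a by rewrite /r; case: ifP; rewrite ?mul1r ?mulN1r; lia.
have ain : a \in Ld (sp (bL 0)) by apply: Ld_in; exact: cov_sp.
have [k [Pk hk Hk]] := exists_max (fun j => r * j) (P := fun j => F (bL 0) (bL j) != 0) ain Xa.
have rk : 0 < r * k by apply: lt_le_trans hk.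
have Hka : forall a, r * k < r * a -> F (bL 0) (bL a) = 0.
  move=> a' ha'; apply/eqP; apply: contraT => Xa'.
  have := Hk a' (Ld_in (cov_sp Xa')) Xa'; by rewrite leNgt ha'.
have Ht : forall m j, r * k < r * j -> F (bL m) (bL j) = 0.
  move=> m.
  have := @topdeg _ r k (F (bL 0)) (F (bL m)) (sp (bL 0)) (sp (bL m)) (- m)%:~R
    (supp_uniq _) (@cov_sp _) (supp_uniq _) (@cov_sp _) hr rk Pk Hka.
  apply.
  by move=> N; rewrite -EigL; apply: eq_bigr => c _; congr (_ * _); apply: eq_bigr => c' _; rewrite brL.
have [x Hx] := surj (bL (k + r)).
have := Hx (bL (k + r)); rewrite eqxx big1; first by move/eqP; rewrite eq_sym oner_eq0.
move=> c _; case: c => m; last 3 first.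
- by rewrite FI_L mulr0.
- by rewrite Fpar ?mulr0.
- by rewrite Fpar ?mulr0.
by rewrite Ht ?mulr0 //; case: hr => ->; rewrite ?mul1r ?mulN1r; lia.
Qed.

Lemma Fev b B : parity B -> parity b = false -> F b B = 0.
Proof. by move=> pB pb; apply: Fpar; rewrite pB pb. Qed.

Lemma notI m : (forall j, F (bL m) (bL j) = 0) -> False.
Proof.
move=> H; apply: (@nonzero (bI (m + (m - 1)))) => B.
have := brS (bL m) (bI (m - 1)) B.
rewrite ext_brc {1}/br big_cons big_nil addr0 /=.
rewrite (_ : m - (m - 1) = 1); last by lia.
rewrite mul1r => ->; rewrite big1 // => c _.
case: c => a; last 2 first.
- by rewrite Fev ?mul0r.
- by rewrite Fev ?mul0r.
- by rewrite H mul0r.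
rewrite big1 ?mulr0 // => c' _; case: c' => b.
- by rewrite FI_L mul0r.
- by rewrite /br coef_nil mulr0.
- by rewrite Fev ?mul0r.
- by rewrite Fev ?mul0r.
Qed.

Local Notation u := (F (bL 0) (bL 0)).

Lemma Lrel m j : F (bL m) (bL j) != 0 -> u * j%:~R = m%:~R.
Proof.
move=> Y0; have := EigL m (bL j).
under eq_bigr => c _ do under eq_bigr => c' _ do rewrite brL.
rewrite (@LconcL _ _ _ _ _ 0) ?supp_uniq //; try exact: cov_sp; last first.
  by move=> a; exact: X0L.
rewrite !subr0 sub0r => E.
have : F (bL m) (bL j) * (u * j%:~R - m%:~R) = 0.
  have -> : F (bL m) (bL j) * (u * j%:~R - m%:~R) =
      - (u * (F (bL m) (bL j) * (- j)%:~R) - (- m)%:~R * F (bL m) (bL j)).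
    by rewrite !intrN; ring.
  by rewrite E subrr oppr0.
by move/eqP; rewrite mulf_eq0 (negbTE Y0) /= subr_eq0 => /eqP.
Qed.

Lemma exL (Y : basis -> C) s : cover Y s -> ~~ has (fun j => Y (bL j) != 0) (Ld s) ->
  forall j, Y (bL j) = 0.
Proof.
move=> cv /hasPn H j; apply/eqP; apply: contraT => Yj.
by have := H j (Ld_in (cv _ Yj)); rewrite Yj.
Qed.

Lemma epsP : exists eps : int, [/\ eps = 1 \/ eps = -1, u = eps%:~R &
   forall m j, F (bL m) (bL j) != 0 -> j = eps * m].
Proof.
have [x Hx] := surj (bL 1).
have [hm|hm] := boolP (has (fun m => F (bL m) (bL 1) != 0) (Ld (supp x))); last first.
  exfalso; have := Hx (bL 1); rewrite eqxx big_seq big1; first by move/eqP; rewrite eq_sym oner_eq0.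
  move=> c cx; case: c cx => a cx.
  - move/hasPn: hm => /(_ a (Ld_in cx)); rewrite negbK => /eqP ->; by rewrite mulr0.
  - by rewrite FI_L mulr0.
  - by rewrite Fpar ?mulr0.
  - by rewrite Fpar ?mulr0.
have [m _ Fm] := hasP hm.
have um : u = m%:~R by rewrite -(Lrel Fm) mulr1.
have [hj|hj] := boolP (has (fun j => F (bL 1) (bL j) != 0) (Ld (sp (bL 1)))); last first.
  by exfalso; apply: (@notI 1); apply: exL hj; exact: cov_sp.
have [j _ Fj] := hasP hj.
have := Lrel Fj; rewrite um -intrM => /eqP; rewrite -[1]/(1%:~R) eqr_int => /eqP mj.
have he : m = 1 \/ m = -1.
  have : j * m = 1 by rewrite mulrC.
  by move/intUnitRing.unitzPl; rewrite qualifE /= => /orP[/eqP->|/eqP->]; [left|right].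
exists m; split => // m' j' /Lrel; rewrite um -intrM => /eqP; rewrite eqr_int => /eqP <-.
by case: he => ->; lia.
Qed.

Lemma LcF b b' a0 N : (forall a, a != a0 -> F b (bL a) = 0) ->
  \sum_(c <- sp b) F b c * \sum_(c' <- sp b') F b' c' * brLv c c' N
  = F b (bL a0) * (F b' (bL (N - a0)) * (a0 - (N - a0))%:~R).
Proof. move=> H; apply: LconcL => //; try exact: supp_uniq; exact: cov_sp. Qed.

Lemma IcF b b' a0 b0 N : parity b = false -> parity b' = false ->
  (forall a, a != a0 -> F b (bL a) = 0) -> (forall a, a != b0 -> F b' (bL a) = 0) ->
  \sum_(c <- sp b) F b c * \sum_(c' <- sp b') F b' c' * brIv half c c' N
  = F b (bL a0) * (F b' (bI (N - a0)) * (a0 - (N - a0))%:~R)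
    + F b (bI (N - b0)) * (F b' (bL b0) * - (b0 - (N - b0))%:~R).
Proof.
move=> pb pb' H H'; apply: IconcI => //; try exact: supp_uniq; try exact: cov_sp.
- by move=> c pc; apply: Fpar; rewrite pc pb.
- by move=> c pc; apply: Fpar; rewrite pc pb'.
Qed.

Section Eps.
Variable eps : int.
Hypothesis he : eps = 1 \/ eps = -1.
Hypothesis hu : u = eps%:~R.
Hypothesis hL : forall m j, F (bL m) (bL j) != 0 -> j = eps * m.

Lemma ee : eps * eps = 1. Proof. by case: he => ->. Qed.
Lemma eeC : (eps%:~R : C) * eps%:~R = 1. Proof. by rewrite -intrM ee. Qed.

Lemma LL m j : j != eps * m -> F (bL m) (bL j) = 0.
Proof. move=> h; apply/eqP; apply: contraNT h => /hL ->; exact: eqxx. Qed.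

Lemma II n N : N != eps * n -> F (bI n) (bI N) = 0.
Proof.
move=> hN; apply/eqP; apply: contraNT hN => Y0.
have := EigI n (bI N).
under eq_bigr => c _ do under eq_bigr => c' _ do rewrite brI.
rewrite (@IcF _ _ 0 0) //; last 2 first.
- by move=> a; exact: X0L.
- by move=> a _; exact: FI_L.
rewrite FI_L !subr0 sub0r mul0r mulr0 addr0 hu => E.
have : F (bI n) (bI N) * (eps%:~R * N%:~R - n%:~R) = 0.
  have -> : F (bI n) (bI N) * (eps%:~R * N%:~R - n%:~R) =
      - (eps%:~R * (F (bI n) (bI N) * (- N)%:~R) - (- n)%:~R * F (bI n) (bI N)).
    by rewrite !intrN; ring.
  by rewrite E subrr oppr0.
move/eqP; rewrite mulf_eq0 (negbTE Y0) /= subr_eq0 -intrM eqr_int => /eqP <-.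
by rewrite mulrA ee mul1r.
Qed.

Definition y m := F (bL m) (bL (eps * m)).
Definition mu n := F (bI n) (bI (eps * n)).

Lemma y_nz m : y m != 0.
Proof.
apply/eqP => y0; apply: (@notI m) => j.
have [->|hj] := eqVneq j (eps * m); first exact: y0.
exact: LL.
Qed.

Lemma mu_nz n : mu n != 0.
Proof.
apply/eqP => m0; apply: (@nonzero (bI n)); case=> a.
- exact: FI_L.
- have [->|hj] := eqVneq a (eps * n); first exact: m0.
  exact: II.
- by rewrite Fev.
- by rewrite Fev.
Qed.

Lemma relLL m n : (m - n)%:~R * y (m + n) = eps%:~R * (m - n)%:~R * y m * y n.
Proof.
have := brS (bL m) (bL n) (bL (eps * (m + n))).
rewrite ext_brc {1}/br big_cons big_nil addr0 /= => ->.
under eq_bigr => c _ do under eq_bigr => c' _ do rewrite brL.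
rewrite (@LcF _ _ (eps * m)); last by move=> a ha; exact: LL.
rewrite (_ : eps * (m + n) - eps * m = eps * n); last by rewrite mulrDr addrC addKr.
rewrite -/(y m) -/(y n) (_ : eps * m - eps * n = eps * (m - n)); last by rewrite mulrBr.
by rewrite intrM; ring.
Qed.

Lemma relLI m n : (m - n)%:~R * mu (m + n) = eps%:~R * (m - n)%:~R * y m * mu n.
Proof.
have := brS (bL m) (bI n) (bI (eps * (m + n))).
rewrite ext_brc {1}/br big_cons big_nil addr0 /= => ->.
under eq_bigr => c _ do under eq_bigr => c' _ do rewrite brI.
rewrite (@IcF _ _ (eps * m) 0) //; last 2 first.
- by move=> a ha; exact: LL.
- by move=> a _; exact: FI_L.
rewrite FI_L mul0r mulr0 addr0.
rewrite (_ : eps * (m + n) - eps * m = eps * n); last by rewrite mulrDr addrC addKr.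
rewrite -/(y m) -/(mu n) (_ : eps * m - eps * n = eps * (m - n)); last by rewrite mulrBr.
by rewrite intrM; ring.
Qed.

Lemma relLLI m n N :
  (m - n)%:~R * F (bL (m + n)) (bI N) =
  y m * (F (bL n) (bI (N - eps * m)) * (eps * m - (N - eps * m))%:~R)
  + F (bL m) (bI (N - eps * n)) * (y n * - (eps * n - (N - eps * n))%:~R).
Proof.
have := brS (bL m) (bL n) (bI N).
rewrite ext_brc {1}/br big_cons big_nil addr0 /= => ->.
under eq_bigr => c _ do under eq_bigr => c' _ do rewrite brI.
rewrite (@IcF _ _ (eps * m) (eps * n)) //.
- by move=> a ha; exact: LL.
- by move=> a ha; exact: LL.
Qed.


Lemma eps_nz : (eps%:~R : C) != 0.
Proof. by case: he => ->; rewrite ?oppr_eq0 oner_eq0. Qed.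

Definition w m := eps%:~R * y m.

Lemma w_nz m : w m != 0.
Proof. by rewrite mulf_neq0 ?eps_nz ?y_nz. Qed.

Lemma wfe m n : m != n -> w (m + n) = w m * w n.
Proof.
move=> mn; have := relLL m n.
have d0 : ((m - n)%:~R : C) != 0 by rewrite intr_eq0 subr_eq0.
move=> E; rewrite /w.
have -> : y (m + n) = eps%:~R * y m * y n.
  by apply: (mulfI d0); rewrite E; ring.
ring.
Qed.

Definition alpha := w 1.
Lemma alpha_nz : alpha != 0. Proof. exact: w_nz. Qed.
Lemma w_exp m : w m = alpha ^ m. Proof. apply: mult_fe; [exact: wfe | exact: w_nz]. Qed.
Lemma y_exp m : y m = eps%:~R * alpha ^ m.
Proof. by rewrite -w_exp /w mulrA eeC mul1r. Qed.

Lemma mu_exp k : mu k = alpha ^ k * mu 0.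
Proof.
have [->|k0] := eqVneq k 0; first by rewrite expr0z mul1r.
have := relLI k 0.
rewrite (_ : k + 0 = k); last by lia.
rewrite y_exp.
have d0 : (k%:~R : C) != 0 by rewrite intr_eq0.
move=> E; apply: (mulfI d0); rewrite E.
have -> : eps%:~R * k%:~R * (eps%:~R * alpha ^ k) * mu 0 =
   (eps%:~R * eps%:~R) * (k%:~R * (alpha ^ k * mu 0)) by ring.
by rewrite eeC mul1r.
Qed.

Definition Z m j := F (bL m) (bI j).

Lemma Zrel m k : k%:~R * Z m (eps * (m + k)) = alpha ^ m * (k - m)%:~R * Z 0 (eps * k).
Proof.
have := relLLI m 0 (eps * (m + k)).
rewrite (_ : m + 0 = m); last by lia.
rewrite (_ : eps * (m + k) - eps * 0 = eps * (m + k)); last by ring.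
rewrite (_ : eps * 0 - eps * (m + k) = - (eps * (m + k))); last by ring.
rewrite (_ : eps * (m + k) - eps * m = eps * k); last by ring.
rewrite (_ : eps * m - (eps * k) = eps * (m - k)); last by ring.
rewrite !y_exp expr0z mulr1 -/(Z m _) -/(Z 0 _) !intrN !intrM !intrD ?intrB => E.
have h := eeC.
set e := (eps%:~R : C) in E h *.
set A := Z m _ in E *; set B := Z 0 _ in E *.
have E2 : m%:~R * A = (e * e) * (alpha ^ m * (m%:~R - k%:~R) * B + (m%:~R + k%:~R) * A).
  by rewrite E; ring.
rewrite h mul1r in E2.
rewrite ?intrB; apply/eqP; rewrite -subr_eq0; apply/eqP.
rewrite intrN. have -> : k%:~R * A - alpha ^ m * (k%:~R - m%:~R) * B
  = - (m%:~R * A - (alpha ^ m * (m%:~R - k%:~R) * B + (m%:~R + k%:~R) * A)) by ring.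
by rewrite -E2 subrr oppr0.
Qed.

Lemma Zdrel m n : m != n ->
  Z (m + n) (eps * (m + n)) = alpha ^ m * Z n (eps * n) + alpha ^ n * Z m (eps * m).
Proof.
move=> mn; have := relLLI m n (eps * (m + n)).
rewrite (_ : eps * (m + n) - eps * m = eps * n); last by ring.
rewrite (_ : eps * (m + n) - eps * n = eps * m); last by ring.
rewrite !y_exp -/(Z (m + n) _) -/(Z m _) -/(Z n _) ?intrN ?intrM ?intrD ?intrN ?intrM => E.
have d0 : ((m - n)%:~R : C) != 0 by rewrite intr_eq0 subr_eq0.
have h := eeC.
set e := (eps%:~R : C) in E h *.
apply: (mulfI d0); rewrite intrB E.
set P := alpha ^ m; set Q := alpha ^ n.
set A := Z m _; set B := Z n _.
rewrite -[X in _ = X]mul1r -h.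
ring.
Qed.


Definition beta := Z 1 (eps * 1) / alpha ^ 1.

Lemma Zdiag m : Z m (eps * m) = m%:~R * alpha ^ m * beta.
Proof.
pose e k := Z k (eps * k) / alpha ^ k.
have an : forall k, alpha ^ k != 0 by move=> k; apply: expfz_neq0; exact: alpha_nz.
have fe : forall m n, m != n -> e (m + n) = e m + e n.
  move=> a b ab; rewrite /e Zdrel // expfzDr ?alpha_nz //.
  by field; rewrite ?an.
have := add_fe fe m; rewrite /e => E.
have -> : Z m (eps * m) = Z m (eps * m) / alpha ^ m * alpha ^ m by rewrite divfK.
by rewrite E /beta; ring.
Qed.

Definition Id (s : seq basis) := [seq (if b is bI a then a else 0) | b <- s].
Definition K := undup [seq k <- [seq eps * a | a <- Id (sp (bL 0))] | k != 0].
Definition cf k := - Z 0 (eps * k) / (k%:~R * alpha ^ k * mu 0).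
Definition tau := [seq (cf k, k) | k <- K].

Lemma an k : alpha ^ k != 0. Proof. apply: expfz_neq0; exact: alpha_nz. Qed.

Lemma finalI m B : coef (ext sig (Iact half lam tau [:: (1, bI m)])) B =
  coef [:: (alpha ^ m * mu 0, bI (eps * m))] B.
Proof.
rewrite (ext_coef_eq _ (@Iact_I _ half lam tau m)) ext1 coef_cons coef_nil addr0.
case: B => j /=.
- by rewrite FI_L.
- rewrite eqII; have [<-|hj] := eqVneq (eps * m) j; first exact: mu_exp.
  by rewrite II // eq_sym.
- by rewrite Fev.
- by rewrite Fev.
Qed.

Lemma finalL m B : coef (ext sig (Iact half lam tau [:: (1, bL m)])) B =
  coef [:: (eps%:~R * alpha ^ m, bL (eps * m)); (m%:~R * alpha ^ m * beta, bI (eps * m))] B.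
Proof.
rewrite (ext_coef_eq _ (@Iact_L _ half lam tau m)) coef_ext big_cons /= mul1r !big_map /=.
rewrite !coef_cons coef_nil addr0.
case: B => j /=.
- rewrite big1 ?addr0; last by move=> k _; rewrite FI_L mulr0.
  rewrite eqLL; have [<-|hj] := eqVneq (eps * m) j; first by rewrite -/(y m) y_exp ?addr0.
  by rewrite LL ?addr0 // eq_sym.
- rewrite eqII.
  set k0 := eps * j - m.
  have hj : j = eps * (m + k0) by rewrite /k0 addrC subrK mulrA ee mul1r.
  have hk0 : k0 = eps * j - m by [].
  clearbody k0.
  rewrite (@sum_point_eq _ _ K _ k0) ?undup_uniq //; last first.
    move=> k hk; rewrite II ?mulr0 //; apply: contra hk => /eqP hjk.
    by apply/eqP; rewrite hk0 hjk mulrA ee mul1r addrC addKr.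
  have [k00|k0n] := eqVneq k0 0.
    have -> : (k0 \in K) = false by rewrite /K mem_undup mem_filter k00 eqxx.
    have hj0 : j = eps * m by rewrite hj k00; ring.
    by rewrite hj0 eqxx addr0 add0r -/(Z m _) Zdiag.
  have -> : (eps * m == j) = false.
    apply/negbTE; apply: contra k0n => /eqP hm.
    by rewrite hk0 -hm mulrA ee mul1r subrr.
  rewrite add0r hj -/(Z m _) -/(mu _) mu_exp.
  have k0nz : (k0%:~R : C) != 0 by rewrite intr_eq0.
  case: ifP => kK.
    apply: (mulfI k0nz); rewrite mulr0 mulrDr Zrel /cf (@expfzDr _ alpha m k0 alpha_nz).
    by field; rewrite ?k0nz ?an ?mu_nz.
  have Z0 : Z 0 (eps * k0) = 0.
    apply/eqP; apply: contraFT kK => Z0.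
    rewrite /K mem_undup mem_filter k0n /=.
    apply/mapP; exists (eps * k0); last by rewrite mulrA ee mul1r.
    by apply/mapP; exists (bI (eps * k0)) => //; exact: cov_sp.
  have := Zrel m k0; rewrite Z0 mulr0 => /eqP; rewrite mulf_eq0 (negbTE k0nz) /= => /eqP ->.
  by rewrite addr0.
- rewrite Fev // big1 ?addr0 // => k _; by rewrite Fev ?mulr0.
- rewrite Fev // big1 ?addr0 // => k _; by rewrite Fev ?mulr0.
Qed.
End Eps.
End Main.

Unset Implicit Arguments.
Unset Strict Implicit.

Theorem lemma3p2 (C : numClosedFieldType) (half : bool) (lam : C)
  (sig : basis -> elt C) :
  is_aut half lam sig ->
  exists (tau : seq (C * int)) (eps : int) (a mu beta : C),
    [/\ eps = 1 \/ eps = -1, a != 0, mu != 0 &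
    forall m : int,
      coef (ext sig (Iact half lam tau [:: (1, bL m)])) =1
        coef [:: (eps%:~R * a ^ m, bL (eps * m)); (m%:~R * a ^ m * beta, bI (eps * m))]
      /\
      coef (ext sig (Iact half lam tau [:: (1, bI m)])) =1
        coef [:: (a ^ m * mu, bI (eps * m))]].
Proof.
move=> Haut.
have [eps [he hu hL]] := epsP Haut.
exists (tau sig eps), eps, (alpha sig eps), (mu sig eps 0), (beta sig eps); split => //.
- by eapply (@alpha_nz C half lam sig Haut eps); eassumption.
- by eapply (@mu_nz C half lam sig Haut eps); eassumption.
move=> m; split => B.
- by eapply (@finalL C half lam sig Haut eps); eassumption.
- by eapply (@finalI C half lam sig Haut eps); eassumption.
Qed.
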